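(* Let $\mathcal H=(M,n,\mathcal R)$ be a BMS. Then for every vector $v\in\mathbb R^n$ there is a mode $m\in M$ with $v\cdot r\ge 0$ for all $r\in\mathcal R(m)$ if and only if $\mathcal H$ is safe.
   Context: A multi-mode system is a tuple $\mathcal H=(M,n,\mathcal R)$ with $M$ a finite nonempty set of modes, $n\ge1$ variables, and $\mathcal R:M\to 2^{\mathbb R^n}$ giving nonempty rate sets; it is a BMS if each $\mathcal R(m)$ is a bounded convex polytope, and a CMS (constant-rate) if each $\mathcal R(m)$ is a singleton. An instance of a multi-mode system $(M,n,\mathcal R)$ is a CMS $(M,n,R)$ with $R(m)\in\mathcal R(m)$ for every $m$ (writing $R(m)$ for the single rate). A CMS $(M,n,R)$ is safe if there are $t_m\ge0$ ($m\in M$) with $\sum_{m\in M}t_m=1$ and $\sum_{m\in M}t_m R(m)=\vec 0$. The extreme-rate system $\mathrm{Ext}(\mathcal H)$ of a BMS $\mathcal H=(M,n,\mathcal R)$ is $(M,n,\mathcal R')$ with $\mathcal R'(m)$ the (finite) set of vertices of $\mathcal R(m)$. A BMS $\mathcal H$ is safe if every instance of $\mathrm{Ext}(\mathcal H)$ is safe. *)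

(* Defs.v *)
(* the statement is purely order-theoretic/linear-algebraic,
   so it is stated over an arbitrary real field F (R is an instance). *)
From HB Require Import structures.
From mathcomp Require Import all_boot all_order all_algebra.
Set Implicit Arguments. Unset Strict Implicit. Unset Printing Implicit Defensive.
Import Order.TTheory GRing.Theory Num.Theory.
Local Open Scope ring_scope.

Definition dot (F : realFieldType) (n : nat) (v r : 'rV[F]_n) : F :=
  \sum_(i < n) v 0 i * r 0 i.

Definition in_conv (F : realFieldType) (n : nat) (s : seq 'rV[F]_n) (x : 'rV[F]_n) : Prop :=
  exists w : 'I_(size s) -> F,
    (forall i, 0 <= w i) /\ \sum_i w i = 1 /\
    x = \sum_i w i *: nth 0 s i.

Definition is_polytope (F : realFieldType) (n : nat) (S : 'rV[F]_n -> Prop) : Prop :=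
  exists s : seq 'rV[F]_n, s <> [::] /\ forall x, S x <-> in_conv s x.

Definition is_vertex (F : realFieldType) (n : nat) (S : 'rV[F]_n -> Prop) (p : 'rV[F]_n) : Prop :=
  S p /\ forall (x y : 'rV[F]_n) (t : F), S x -> S y -> 0 < t < 1 ->
    p = t *: x + (1 - t) *: y -> x = y.

Definition cms_safe (F : realFieldType) (M : finType) (n : nat) (R : M -> 'rV[F]_n) : Prop :=
  exists t : M -> F, (forall m, 0 <= t m) /\ \sum_m t m = 1 /\ \sum_m t m *: R m = 0.

(* A BMS (M, n, RR) is safe: every instance of Ext(H) (a choice of a vertex
   of RR m for each mode m) is a safe CMS. *)
Definition bms_safe (F : realFieldType) (M : finType) (n : nat) (RR : M -> 'rV[F]_n -> Prop) : Prop :=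
  forall R : M -> 'rV[F]_n, (forall m, is_vertex (RR m) (R m)) -> cms_safe R.

(* Main.v *)
Require Import Defs.
From Stdlib Require Import Classical ClassicalEpsilon.
From HB Require Import structures.
From mathcomp Require Import all_boot all_order all_algebra.
From mathcomp Require Import ring lra zify.
Import Order.TTheory GRing.Theory Num.Theory.
Local Open Scope ring_scope.

Lemma fin_max (F : realFieldType) (I : finType) (A : pred I) (L : I -> F) :
  (exists i, A i) -> exists i0, A i0 /\ forall i, A i -> L i <= L i0.
Proof.
case=> i Ai.
case: (@arg_maxP _ F I i A L Ai) => j Aj Hj.
by exists j; split => // k Ak; apply: Hj.
Qed.

Lemma fin_min (F : realFieldType) (I : finType) (A : pred I) (L : I -> F) :
  (exists i, A i) -> exists i0, A i0 /\ forall i, A i -> L i0 <= L i.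
Proof.
case=> i Ai.
case: (@arg_minP _ F I i A L Ai) => j Aj Hj.
by exists j; split => // k Ak; apply: Hj.
Qed.

Lemma sep_exists (F : realFieldType) (I : finType) (A B : pred I) (L U : I -> F) :
  (forall i j, A i -> B j -> L i < U j) ->
  exists c, (forall i, A i -> L i < c) /\ (forall j, B j -> c < U j).
Proof.
move=> H.
case: (boolP [exists i, A i]) => [/existsP hA | /existsPn nA];
case: (boolP [exists i, B i]) => [/existsP hB | /existsPn nB].
- have [i0 [Ai0 Hi0]] := @fin_max _ _ _ L hA.
  have [j0 [Bj0 Hj0]] := @fin_min _ _ _ U hB.
  have h := H _ _ Ai0 Bj0.
  exists ((L i0 + U j0) / 2); split.
  + move=> i Ai; have := Hi0 _ Ai; lra.
  + move=> j Bj; have := Hj0 _ Bj; lra.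
- have [i0 [Ai0 Hi0]] := @fin_max _ _ _ L hA.
  exists (L i0 + 1); split.
  + move=> i Ai; have := Hi0 _ Ai; lra.
  + by move=> j Bj; move: (nB j); rewrite Bj.
- have [j0 [Bj0 Hj0]] := @fin_min _ _ _ U hB.
  exists (U j0 - 1); split.
  + by move=> i Ai; move: (nA i); rewrite Ai.
  + move=> j Bj; have := Hj0 _ Bj; lra.
- exists 0; split.
  + by move=> i Ai; move: (nA i); rewrite Ai.
  + by move=> j Bj; move: (nB j); rewrite Bj.
Qed.

Section Dot.
Variables (F : realFieldType) (n : nat).
Implicit Types (v x y : 'rV[F]_n).

Lemma dot_sum (I : finType) v (x : I -> 'rV[F]_n) :
  dot v (\sum_i x i) = \sum_i dot v (x i).
Proof.
rewrite /dot exchange_big /=; apply: eq_bigr => j _.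
by rewrite summxE mulr_sumr.
Qed.

Lemma dotZ v (c : F) x : dot v (c *: x) = c * dot v x.
Proof. rewrite /dot mulr_sumr; apply: eq_bigr => j _; rewrite mxE; ring. Qed.

Lemma dotD v x y : dot v (x + y) = dot v x + dot v y.
Proof. rewrite /dot -big_split; apply: eq_bigr => j _; rewrite !mxE; by rewrite mulrDr. Qed.

Lemma dotDl v y x : dot (v + y) x = dot v x + dot y x.
Proof. rewrite /dot -big_split; apply: eq_bigr => j _; by rewrite !mxE mulrDl. Qed.

Lemma dotZl (c : F) v x : dot (c *: v) x = c * dot v x.
Proof. rewrite /dot mulr_sumr; apply: eq_bigr => j _; rewrite mxE; ring. Qed.

Lemma dot0 v : dot v 0 = 0.
Proof. by rewrite /dot big1 // => j _; rewrite mxE mulr0. Qed.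

Lemma dot0l x : dot 0 x = 0.
Proof. by rewrite /dot big1 // => j _; rewrite mxE mul0r. Qed.

Lemma dot_delta (k : 'I_n) x : dot (delta_mx 0 k) x = x 0 k.
Proof.
rewrite /dot (bigD1 k) //= mxE !eqxx mul1r big1 ?addr0 // => j hj.
by rewrite mxE (negbTE hj) andbF mul0r.
Qed.

Lemma dot_comb (I : finType) v (c : I -> F) (x : I -> 'rV[F]_n) :
  dot v (\sum_i c i *: x i) = \sum_i c i * dot v (x i).
Proof. by rewrite dot_sum; apply: eq_bigr => i _; rewrite dotZ. Qed.

End Dot.

Lemma gordan_ind (F : realFieldType) (n d : nat) :
  forall (I : finType) (P : pred I) (a : I -> 'rV[F]_n),
  (forall i (j : 'I_n), (d <= j)%N -> a i 0 j = 0) ->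
  (forall t : I -> F, (forall i, 0 <= t i) -> (forall i, ~~ P i -> t i = 0) ->
     \sum_i t i *: a i = 0 -> forall i, t i = 0) ->
  exists v : 'rV[F]_n, forall i, P i -> dot v (a i) < 0.
Proof.
elim: d => [|d IH] I P a hs hn.
  have a0 : forall i, a i = 0.
    by move=> i; apply/rowP => j; rewrite mxE hs.
  exists 0 => i Pi; exfalso.
  pose t := fun j : I => if j == i then (1 : F) else 0.
  have := hn t.
  have ht0 : forall j, 0 <= t j by move=> j; rewrite /t; case: ifP.
  have htP : forall j, ~~ P j -> t j = 0.
    by move=> j hj; rewrite /t; case: eqP => // e; move: hj; rewrite e Pi.
  have hsum : \sum_j t j *: a j = 0 by rewrite big1 // => j _; rewrite a0 scaler0.
  move=> /(_ ht0 htP hsum i); rewrite /t eqxx => /eqP; by rewrite oner_eq0.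
case: (ltnP d n) => hd; last first.
  apply: IH hn => i j hj; apply: hs; have := ltn_ord j; lia.
pose k := Ordinal hd.
pose pos i := P i && (0 < a i 0 k).
pose neg i := P i && (a i 0 k < 0).
pose zer i := P i && (a i 0 k == 0).
pose Q (p : I * I) := (pos p.1 && neg p.2) || ((p.1 == p.2) && zer p.1).
pose u (p : I * I) := if Q p then (if p.1 == p.2 then 1 else - a p.2 0 k) else 0.
pose w (p : I * I) := if Q p then (if p.1 == p.2 then 0 else a p.1 0 k) else 0.
pose b (p : I * I) := u p *: a p.1 + w p *: a p.2.
have Qne : forall p, Q p -> p.1 != p.2 -> pos p.1 && neg p.2.
  by move=> p; rewrite /Q => /orP[//|/andP[->]].
have huQ : forall p, Q p -> 0 < u p.
  move=> p hQ; rewrite /u hQ; case: ifP => [_|/negbT hne]; first exact: ltr01.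
  by move: (Qne p hQ hne) => /andP[_ /andP[_ h]]; rewrite oppr_gt0.
have hu : forall p, 0 <= u p.
  by move=> p; case hQ: (Q p); [apply/ltW/huQ | rewrite /u hQ].
have hw : forall p, 0 <= w p.
  move=> p; rewrite /w; case hQ: (Q p) => //; case: ifP => [//|/negbT hne].
  by move: (Qne p hQ hne) => /andP[/andP[_ h] _]; apply: ltW.
have hbs : forall p (j : 'I_n), (d <= j)%N -> b p 0 j = 0.
  move=> p j hj; rewrite /b !mxE.
  have [hj'|hjk] : (d.+1 <= j)%N \/ j = k.
    case: (ltnP d j) => h; first by left.
    by right; apply: val_inj => /=; lia.
    by rewrite !hs // !mulr0 addr0.
  rewrite hjk /u /w; case hQ: (Q p); last by rewrite !mul0r addr0.
  case: ifP => [/eqP e|/negbT hne].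
    move: hQ; rewrite /Q e eqxx /= => /orP[/andP[/andP[_ h1] /andP[_ h2]]|/andP[_ /eqP ->]].
      by exfalso; have := lt_trans h2 h1; rewrite ltxx.
    by rewrite mulr0 mul0r addr0.
  ring.
have hbn : forall t : I * I -> F, (forall p, 0 <= t p) -> (forall p, ~~ Q p -> t p = 0) ->
    \sum_p t p *: b p = 0 -> forall p, t p = 0.
  move=> t ht0 htQ htsum.
  pose c1 i := \sum_j t (i, j) * u (i, j).
  pose c2 i := \sum_j t (j, i) * w (j, i).
  have Hsum : \sum_p t p *: b p = \sum_i (c1 i + c2 i) *: a i.
    rewrite /b; under eq_bigr do rewrite scalerDr !scalerA.
    rewrite big_split /=.
    under [X in _ = X]eq_bigr do rewrite scalerDl.
    rewrite big_split /=; congr (_ + _).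
      rewrite (eq_bigr (fun p : I * I => (t (p.1, p.2) * u (p.1, p.2)) *: a p.1)); last by case.
      rewrite -(pair_bigA _ (fun i j => (t (i, j) * u (i, j)) *: a i)) /=.
      by apply: eq_bigr => i _; rewrite /c1 scaler_suml.
    rewrite (eq_bigr (fun p : I * I => (t (p.1, p.2) * w (p.1, p.2)) *: a p.2)); last by case.
    rewrite -(pair_bigA _ (fun i j => (t (i, j) * w (i, j)) *: a j)) /= exchange_big /=.
    by apply: eq_bigr => i _; rewrite /c2 scaler_suml.
  have hc1 : forall i, 0 <= c1 i.
    by move=> i; apply: sumr_ge0 => j _; apply: mulr_ge0.
  have hc2 : forall i, 0 <= c2 i.
    by move=> i; apply: sumr_ge0 => j _; apply: mulr_ge0.
  have hc := hn (fun i => c1 i + c2 i).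
  have hcP : forall i, ~~ P i -> c1 i + c2 i = 0.
    move=> i hPi; rewrite /c1 /c2 !big1 ?addr0 // => j _.
      rewrite /w; case hQ: (Q (j, i)); last by rewrite mulr0.
      case: ifP => [_|/negbT hne]; first by rewrite mulr0.
      by move: (Qne _ hQ hne) => /andP[_ /andP[hP _]]; move: hPi; rewrite hP.
    rewrite /u; case hQ: (Q (i, j)); last by rewrite mulr0.
    move: hQ; rewrite /Q /pos /zer /= (negbTE hPi) /= andbF.
    done.
  have := hc (fun i => addr_ge0 (hc1 i) (hc2 i)) hcP.
  rewrite -Hsum => /(_ htsum) hc0.
  case=> i j; case hQ: (Q (i, j)); last by apply: htQ; rewrite hQ.
  have /eqP := hc0 i; rewrite paddr_eq0 // => /andP[/eqP h1 _].
  have := @psumr_eq0P _ _ xpredT (fun j => t (i, j) * u (i, j))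
    (fun j _ => mulr_ge0 (ht0 _) (hu _)) h1 j isT => /eqP.
  rewrite mulf_eq0 => /orP[/eqP //|/eqP hu0].
  by have := huQ _ hQ; rewrite hu0 ltxx.
have [v' hv'] := IH _ Q b hbs hbn.
have hbij : forall i j, pos i -> neg j ->
    dot v' (b (i, j)) = - a j 0 k * dot v' (a i) + a i 0 k * dot v' (a j).
  move=> i j hi hj.
  have hQ : Q (i, j) by rewrite /Q /= hi hj.
  have hne : (i == j) = false.
    apply/negbTE/eqP => e; move: hi hj; rewrite e /pos /neg => /andP[_ h1] /andP[_ h2].
    by have := lt_trans h2 h1; rewrite ltxx.
  by rewrite /b /u /w hQ /= hne dotD !dotZ.
pose L j := - dot v' (a j) / a j 0 k.
have hLU : forall j i, neg j -> pos i -> L j < L i.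
  move=> j i hj hi.
  have hQ : Q (i, j) by rewrite /Q /= hi hj.
  have := hv' _ hQ; rewrite hbij //.
  move: hi hj; rewrite /pos /neg => /andP[_ hx] /andP[_ hy].
  rewrite /L.
  set x := a i 0 k; set y := a j 0 k; set p := dot v' (a i); set q := dot v' (a j) => h.
  have hx0 : x != 0 by rewrite gt_eqF.
  have hy0 : y != 0 by rewrite lt_eqF.
  rewrite -subr_gt0.
  have -> : - p / x - - q / y = (y * p - x * q) / (x * - y) by field; rewrite hx0 hy0.
  apply: divr_gt0; first lra.
  by apply: mulr_gt0 => //; rewrite oppr_gt0.
have [c [hcL hcU]] := @sep_exists F I neg pos L L hLU.
exists (v' + c *: delta_mx 0 k) => i Pi.
rewrite dotDl dotZl dot_delta.
case: (ltrgtP (a i 0 k) 0) => hk.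
- have hj : neg i by rewrite /neg Pi hk.
  have := hcL i hj; rewrite /L.
  move: (dot v' (a i)) (a i 0 k) hk => q y hk h.
  have hy0 : y != 0 by rewrite lt_eqF.
  have hz : (- q / y) * y = - q by field.
  move: h hz; set z := - q / y => h hz.
  have hp : 0 < (c - z) * (- y) by apply: mulr_gt0; lra.
  nra.
- have hj : pos i by rewrite /pos Pi hk.
  have := hcU i hj; rewrite /L.
  move: (dot v' (a i)) (a i 0 k) hk => q y hk h.
  have hy0 : y != 0 by rewrite gt_eqF.
  have hz : (- q / y) * y = - q by field.
  move: h hz; set z := - q / y => h hz.
  have hp : 0 < (z - c) * y by apply: mulr_gt0; lra.
  nra.
- have hQ : Q (i, i) by rewrite /Q /= eqxx /zer Pi hk eqxx orbT.
  have := hv' _ hQ; rewrite /b /u /w hQ eqxx /= scale1r scale0r addr0 hk mulr0 addr0.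
  done.
Qed.

Section Lex.
Variables (F : realFieldType) (n : nat) (s : seq 'rV[F]_n).
Let N := size s.
Let pts (i : 'I_N) : 'rV[F]_n := nth 0 s i.

Fixpoint good (fs : seq 'rV[F]_n) (A : 'I_N -> bool) (p : 'I_N) : Prop :=
  match fs with
  | [::] => True
  | f :: fs' => (forall i, A i -> dot f (pts p) <= dot f (pts i)) /\
      good fs' (fun i => A i && (dot f (pts i) == dot f (pts p))) p
  end.

Lemma good_ext fs : forall A B p, (forall i, A i = B i) -> good fs A p -> good fs B p.
Proof.
elim: fs => [//|f fs IH] A B p hAB /= [h1 h2]; split.
  by move=> i; rewrite -hAB; apply: h1.
by apply: IH h2 => i; rewrite hAB.
Qed.

Lemma good_exists fs : forall (A : 'I_N -> bool) p0, A p0 -> exists p, A p /\ good fs A p.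
Proof.
elim: fs => [|f fs IH] A p0 Ap0; first by exists p0.
have [p1 [Ap1 hp1]] := @fin_min F _ A (fun i => dot f (pts i)) (ex_intro _ p0 Ap0).
have [p [/andP[Ap /eqP ep] hp]] :=
  IH (fun i => A i && (dot f (pts i) == dot f (pts p1))) p1 ltac:(by rewrite /= Ap1 eqxx).
exists p; split => //=; split.
  by move=> i Ai; rewrite ep; apply: hp1.
by apply: good_ext hp => i; rewrite ep.
Qed.

Lemma good_face fs : forall A p, good fs A p -> A p ->
  forall (wx wy : 'I_N -> F) (t : F),
  (forall i, 0 <= wx i) -> (forall i, 0 <= wy i) -> \sum_i wx i = 1 -> \sum_i wy i = 1 ->
  (forall i, wx i != 0 -> A i) -> (forall i, wy i != 0 -> A i) -> 0 < t < 1 ->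
  pts p = t *: (\sum_i wx i *: pts i) + (1 - t) *: (\sum_i wy i *: pts i) ->
  forall i, (wx i != 0 -> forall f, f \in fs -> dot f (pts i) = dot f (pts p)) /\
            (wy i != 0 -> forall f, f \in fs -> dot f (pts i) = dot f (pts p)).
Proof.
elim: fs => [|f fs IH] A p /=.
  by move=> _ _ wx wy t _ _ _ _ _ _ _ _ i; split => _ f; rewrite in_nil.
move=> [hmin hg] Ap wx wy t hx0 hy0 hx1 hy1 hxA hyA ht hp.
pose m := dot f (pts p).
have key : forall w : 'I_N -> F, (forall i, 0 <= w i) -> \sum_i w i = 1 ->
    (forall i, w i != 0 -> A i) ->
    \sum_i (w i * (dot f (pts i) - m)) = dot f (\sum_i w i *: pts i) - m.
  move=> w _ h1 _; rewrite dot_comb.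
  under eq_bigr do rewrite mulrBr.
  by rewrite sumrB -mulr_suml h1 mul1r.
have pos : forall w : 'I_N -> F, (forall i, 0 <= w i) ->
    (forall i, w i != 0 -> A i) -> forall i, 0 <= w i * (dot f (pts i) - m).
  move=> w h0 hA i; case: (eqVneq (w i) 0) => [->|hne]; first by rewrite mul0r.
  by apply: mulr_ge0 => //; rewrite subr_ge0; apply: hmin; apply: hA.
have gx := key wx hx0 hx1 hxA.
have gy := key wy hy0 hy1 hyA.
have sx : 0 <= \sum_i wx i * (dot f (pts i) - m) by apply: sumr_ge0 => i _; apply: pos.
have sy : 0 <= \sum_i wy i * (dot f (pts i) - m) by apply: sumr_ge0 => i _; apply: pos.
have hm : m = t * dot f (\sum_i wx i *: pts i) + (1 - t) * dot f (\sum_i wy i *: pts i).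
  by rewrite /m {1}hp dotD !dotZ.
have ex : \sum_i wx i * (dot f (pts i) - m) = 0.
  move: ht => /andP[ht0 ht1].
  have : t * (\sum_i wx i * (dot f (pts i) - m)) + (1 - t) * (\sum_i wy i * (dot f (pts i) - m)) = 0.
    rewrite gx gy. lra.
  nra.
have ey : \sum_i wy i * (dot f (pts i) - m) = 0.
  move: ht => /andP[ht0 ht1].
  have : t * (\sum_i wx i * (dot f (pts i) - m)) + (1 - t) * (\sum_i wy i * (dot f (pts i) - m)) = 0.
    rewrite gx gy. lra.
  nra.
have supp : forall w : 'I_N -> F, (forall i, 0 <= w i) -> (forall i, w i != 0 -> A i) ->
    \sum_i w i * (dot f (pts i) - m) = 0 ->
    forall i, w i != 0 -> A i && (dot f (pts i) == dot f (pts p)).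
  move=> w h0 hA hs i hi.
  have := @psumr_eq0P _ _ xpredT _ (fun i _ => pos w h0 hA i) hs i isT => /eqP.
  rewrite mulf_eq0 (negbTE hi) /= subr_eq0 => ->; by rewrite hA.
have hx' := supp wx hx0 hxA ex.
have hy' := supp wy hy0 hyA ey.
have := IH _ p hg ltac:(by rewrite /= Ap eqxx) wx wy t hx0 hy0 hx1 hy1 hx' hy' ht hp.
move=> H i; have [H1 H2] := H i; split.
  move=> hi g; rewrite in_cons => /orP[/eqP ->|hg']; last exact: H1.
  by have /andP[_ /eqP] := hx' i hi.
move=> hi g; rewrite in_cons => /orP[/eqP ->|hg']; last exact: H2.
by have /andP[_ /eqP] := hy' i hi.
Qed.

End Lex.

Lemma comb_const (F : realFieldType) (n N : nat) (w : 'I_N -> F) (pts : 'I_N -> 'rV[F]_n) q :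
  \sum_i w i = 1 -> (forall i, w i != 0 -> pts i = q) -> \sum_i w i *: pts i = q.
Proof.
move=> h1 h; transitivity (\sum_i w i *: q).
  apply: eq_bigr => i _; case: (eqVneq (w i) 0) => [->|hi]; first by rewrite !scale0r.
  by rewrite h.
by rewrite -scaler_suml h1 scale1r.
Qed.

Lemma vertex_exists (F : realFieldType) (n : nat) (S : 'rV[F]_n -> Prop) v r :
  is_polytope S -> S r -> dot v r < 0 -> exists p, is_vertex S p /\ dot v p < 0.
Proof.
move=> [s [hs hS]] Sr hr.
have hN : (0 < size s)%N by rewrite lt0n size_eq0; apply/eqP.
pose p0 : 'I_(size s) := Ordinal hN.
pose fs := v :: map (fun j => delta_mx 0 j) (enum 'I_n).
have [p [_ hp]] := @good_exists F n s fs (fun _ => true) p0 isT.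
exists (nth 0 s p); split; last first.
  have [w [w0 [w1 er]]] := (hS r).1 Sr.
  move: hr; rewrite er dot_comb => hr.
  apply: le_lt_trans hr.
  have -> : dot v (nth 0 s p) = \sum_i w i * dot v (nth 0 s p) by rewrite -mulr_suml w1 mul1r.
  apply: ler_sum => i _; apply: ler_wpM2l => //.
  by apply: hp.1.
split.
  apply/hS; exists (fun i => if i == p then 1 else 0); split.
    by move=> i; case: ifP.
  split.
    by rewrite (bigD1 p) //= eqxx big1 ?addr0 // => i /negbTE ->.
  by rewrite (bigD1 p) //= eqxx scale1r big1 ?addr0 // => i /negbTE ->; rewrite scale0r.
move=> x y t Sx Sy ht hxy.
have [wx [wx0 [wx1 ex]]] := (hS x).1 Sx.
have [wy [wy0 [wy1 ey]]] := (hS y).1 Sy.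
have hxy' := hxy; rewrite ex ey in hxy'.
have H := @good_face F n s fs (fun _ => true) p hp isT wx wy t wx0 wy0 wx1 wy1
  (fun _ _ => isT) (fun _ _ => isT) ht hxy'.
have eqp : forall i, (forall f, f \in fs -> dot f (nth 0 s i) = dot f (nth 0 s p)) ->
    nth 0 s i = nth 0 s p.
  move=> i hf; apply/rowP => j; rewrite ?mxE.
  have := hf (delta_mx 0 j); rewrite !dot_delta; apply.
  by rewrite in_cons; apply/orP; right; apply/mapP; exists j; rewrite ?mem_enum.
have -> : x = nth 0 s p.
  by rewrite ex; apply: comb_const => // i hi; apply: eqp; apply: (H i).1.
have -> : y = nth 0 s p.
  by rewrite ey; apply: comb_const => // i hi; apply: eqp; apply: (H i).2.
done.
Qed.

Theorem lemma2 (F : realFieldType) (M : finType) (n : nat)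
  (RR : M -> 'rV[F]_n -> Prop)
  (hn : (0 < n)%N) (hM : (0 < #|M|)%N)
  (hpoly : forall m, is_polytope (RR m)) :
  (forall v : 'rV[F]_n, exists m : M, forall r, RR m r -> 0 <= dot v r)
  <-> bms_safe RR.
Proof.
split.
- move=> H R hR.
  case: (classic (cms_safe R)) => // hns; exfalso.
  have hs : forall i (j : 'I_n), (n <= j)%N -> R i 0 j = 0.
    by move=> i j hj; have := ltn_ord j; lia.
  have hn0 : forall t : M -> F, (forall i, 0 <= t i) -> (forall i, ~~ xpredT i -> t i = 0) ->
      \sum_i t i *: R i = 0 -> forall i, t i = 0.
    move=> t ht0 _ hts i.
    case: (eqVneq (\sum_m t m) 0) => hS.
      exact: (@psumr_eq0P _ _ xpredT t (fun i _ => ht0 i) hS i isT).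
    exfalso; apply: hns; exists (fun m => t m / \sum_m t m); split.
      by move=> m; apply: divr_ge0 => //; apply: sumr_ge0.
    split; first by rewrite -mulr_suml mulfV.
    under eq_bigr do rewrite mulrC -scalerA.
    by rewrite -scaler_sumr hts scaler0.
  have [v hv] := @gordan_ind F n n M xpredT R hs hn0.
  have [m hm] := H v.
  have h1 := hm _ (hR m).1.
  have h2 := hv m isT.
  by have := le_lt_trans h1 h2; rewrite ltxx.
- move=> hS v.
  case: (classic (exists m, forall r, RR m r -> 0 <= dot v r)) => // hno; exfalso.
  have hex : forall m, exists p, is_vertex (RR m) p /\ dot v p < 0.
    move=> m.
    have : exists r, RR m r /\ dot v r < 0.
      apply: NNPP => hn'; apply: hno; exists m => r Rr.
      case: (lerP 0 (dot v r)) => // hlt; exfalso; apply: hn'; by exists r.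
    by move=> [r [Rr hr]]; apply: (@vertex_exists _ _ _ _ _ (hpoly m) Rr hr).
  pose R m := proj1_sig (constructive_indefinite_description _ (hex m)).
  have hR : forall m, is_vertex (RR m) (R m) /\ dot v (R m) < 0.
    by move=> m; exact: (proj2_sig (constructive_indefinite_description _ (hex m))).
  have [t [t0 [t1 ts]]] := hS R (fun m => (hR m).1).
  have : dot v (\sum_m t m *: R m) = 0 by rewrite ts dot0.
  rewrite dot_comb => hsum.
  case/card_gt0P: hM => m0 _.
  have [m1 [_ hm1]] := @fin_max F M xpredT (fun m => dot v (R m)) (ex_intro _ m0 isT).
  have : \sum_m t m * dot v (R m) <= \sum_m t m * dot v (R m1).
    by apply: ler_sum => m _; apply: ler_wpM2l => //; apply: hm1.
  rewrite -mulr_suml t1 mul1r hsum.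
  have := (hR m1).2.
  lra.
Qed.
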